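(* Let $n\in\mathbb{N}$, set $p_{2n}=\frac12\left(1-\tan^2\left(\frac{\pi}{4n}\right)\right)$ and $H=K_{2n}$. Then for all $p\in[p_{2n},1]$, \[\min\left\{\mathbb{P}\left[|C_1(\mathbf{H}_\mu)|>n\right]:\ \mu\in\mathcal{M}_{1,\geq p}(K_{2n})\right\}=1-\binom{2n}{n}\left(\frac{1-p}{2}\right)^n.\]
   Context: $K_{2n}$ is the complete graph on $2n$ vertices. A random graph model on $H$ is a probability measure $\mu$ on subsets of $E(H)$, and $\mathbf{H}_\mu$ is the random spanning subgraph of $H$ with edge set distributed according to $\mu$. $\mu$ is $1$-independent if for all sets $A,B\subseteq E(H)$ whose edges span disjoint vertex sets, $E(\mathbf{H}_\mu)\cap A$ and $E(\mathbf{H}_\mu)\cap B$ are independent. $\mathcal{M}_{1,\geq p}(H)$ is the set of $1$-independent measures on $H$ in which each edge is present with probability at least $p$. $C_1(F)$ denotes a largest connected component of the spanning subgraph $(V(H),F)$, and $|C_1|$ its number of vertices. *)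

(* Defs.v *)
From HB Require Import structures.
From mathcomp Require Import all_boot all_order all_algebra.
From mathcomp Require Import reals trigo.
Set Implicit Arguments.
Unset Strict Implicit.
Unset Printing Implicit Defensive.
Import Order.TTheory GRing.Theory Num.Theory.
Local Open Scope ring_scope.

Section Graphs.
Variable T : finType.

(* Edges of the complete graph K_T: the 2-element subsets of T. *)
Definition edge := {e : {set T} | #|e| == 2%N}.

Definition adj (F : {set edge}) : rel T :=
  fun x y => [exists e in F, val e == [set x; y]].

Definition comp_size (F : {set edge}) (x : T) : nat :=
  #|[set y | connect (adj F) x y]|.

Definition C1size (F : {set edge}) : nat := \max_(x : T) comp_size F x.

Definition vspan (A : {set edge}) : {set T} := \bigcup_(e in A) val e.

Variable R : realType.

(* a random graph model: probability mass function on edge sets *)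
Definition is_prob (mu : {ffun {set edge} -> R}) : Prop :=
  (forall F, 0 <= mu F) /\ \sum_(F : {set edge}) mu F = 1.

Definition Pr (mu : {ffun {set edge} -> R}) (Q : pred {set edge}) : R :=
  \sum_(F : {set edge} | Q F) mu F.

Definition one_indep (mu : {ffun {set edge} -> R}) : Prop :=
  forall A B : {set edge}, [disjoint vspan A & vspan B] ->
  forall S S' : {set edge},
    Pr mu [pred F : {set edge} | (F :&: A == S) && (F :&: B == S')] =
    Pr mu [pred F : {set edge} | F :&: A == S] * Pr mu [pred F : {set edge} | F :&: B == S'].

Definition M1ge (p : R) (mu : {ffun {set edge} -> R}) : Prop :=
  [/\ is_prob mu, one_indep mu & forall e : edge, p <= Pr mu [pred F : {set edge} | e \in F]].

End Graphs.

(* Main.v *)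
Require Import Defs.
From HB Require Import structures.
From mathcomp Require Import all_boot all_order all_algebra.
From mathcomp Require Import reals trigo.
From mathcomp Require Import complex.
From mathcomp Require Import zify ring lra.
Import Order.TTheory GRing.Theory Num.Theory.
Set Implicit Arguments.
Unset Strict Implicit.
Unset Printing Implicit Defensive.

Section Comb.
Variable T : finType.
Implicit Types (F : {set edge T}) (X : {set T}).

Lemma adj_sym F : symmetric (adj F).
Proof. by move=> x y; rewrite /adj; apply/existsP/existsP=> -[e He]; exists e; rewrite setUC. Qed.

Lemma csym F : connect_sym (adj F).
Proof. exact/sym_connect_sym/adj_sym. Qed.

Definition cls F X x := [set y in X | connect (adj F) x y].

Lemma cls_eq F X x y : connect (adj F) x y -> cls F X x = cls F X y.
Proof.
move=> cxy; apply/setP=> u; rewrite !inE.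
by rewrite (same_connect (csym F) cxy).
Qed.

Lemma cls_disj F X x y : ~~ connect (adj F) x y -> cls F X x :&: cls F X y = set0.
Proof.
move=> nc; apply/setP=> u; rewrite !inE.
apply/negbTE/negP=> /andP[/andP[_ hx] /andP[_ hy]].
move/negP: nc; apply; apply: connect_trans hx _; by rewrite (csym F).
Qed.

Lemma cls_sub F X x : cls F X x \subset X.
Proof. by apply/subsetP=> u; rewrite inE => /andP[]. Qed.

Lemma cls_rem F X x v w : #|cls F (X :\ v :\ w) x| <= #|cls F X x| - (v \in cls F X x).
Proof.
rewrite (cardsD1 v (cls F X x)) addKn; apply: subset_leq_card.
apply/subsetP=> u; rewrite !inE => /andP[/andP[_ /andP[-> ->]] ->].
by rewrite andbT.
Qed.

Lemma cls_rem2 F X x v w : #|cls F (X :\ v :\ w) x| <= #|cls F X x| - (w \in cls F X x).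
Proof.
rewrite (cardsD1 w (cls F X x)) addKn; apply: subset_leq_card.
apply/subsetP=> u; rewrite !inE => /andP[/andP[-> /andP[_ ->]] ->].
by [].
Qed.

Definition cond F X k := forall z, #|cls F X z| <= k.

Lemma count_ok F X v k : v \in X -> #|X| = k.+1.*2 -> cond F X k.+1 ->
  k.+1 <= #|[set w in X | [&& w != v, ~~ connect (adj F) v w & [forall z, #|cls F (X :\ v :\ w) z| <= k]]]|.
Proof.
move=> vX cX hc.
have cv : v \in cls F X v by rewrite inE vX connect0.
case: (boolP [exists x in X, ~~ connect (adj F) v x && (#|cls F X x| == k.+1)]).
- case/existsP=> x /and3P[xX nvx /eqP cx].
  rewrite -cx; apply: subset_leq_card; apply/subsetP=> w; rewrite !inE => /andP[wX cxw].
  have nvw : ~~ connect (adj F) v w.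
    apply/negP=> cvw; move/negP: nvx; apply; apply: connect_trans cvw _.
    by rewrite (csym F).
  rewrite wX nvw /=; apply/andP; split.
    by apply/negP=> /eqP ewv; move: nvw; rewrite ewv connect0.
  apply/forallP=> z.
  case: (boolP (v \in cls F X z)) => hv.
    by have := cls_rem F X z v w; rewrite hv; have := hc z; lia.
  case: (boolP (w \in cls F X z)) => hw.
    by have := cls_rem2 F X z v w; rewrite hw; have := hc z; lia.
  have nzv : ~~ connect (adj F) z v by move: hv; rewrite inE vX.
  have nzw : ~~ connect (adj F) z w by move: hw; rewrite inE wX.
  have nzx : ~~ connect (adj F) z x.
    apply/negP=> czx; move/negP: nzw; apply; exact: connect_trans czx cxw.
  have d1 := cls_disj X nzv; have d2 := cls_disj X nzx; have d3 := cls_disj X nvx.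
  have s : cls F X z :|: cls F X v :|: cls F X x \subset X.
    by rewrite !subUset !cls_sub.
  have := subset_leq_card s.
  rewrite !cardsU.
  rewrite d1 setIUl d3 d2 setU0 !cards0 !subn0.
  have := cls_rem F X z v w; rewrite (negbTE hv) subn0.
  have : 0 < #|cls F X v| by apply/card_gt0P; exists v.
  lia.
- move=> hno.
  have hb : forall y, y \in X -> ~~ connect (adj F) v y -> #|cls F X y| <= k.
    move=> y yX nvy; have := hc y; rewrite leq_eqVlt ltnS => /orP[/eqP e|//].
    by move/existsP: hno; case; exists y; rewrite yX nvy e eqxx.
  have : #|X :\: cls F X v| <= #|[set w in X | [&& w != v, ~~ connect (adj F) v w & [forall z, #|cls F (X :\ v :\ w) z| <= k]]]|.
    apply: subset_leq_card; apply/subsetP=> w; rewrite !inE => /andP[ncw wX].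
    rewrite wX in ncw; rewrite wX ncw /=.
    apply/andP; split; first by apply/negP=> /eqP ewv; move: ncw; rewrite ewv connect0.
    apply/forallP=> z.
    case: (boolP (v \in cls F X z)) => hv.
      by have := cls_rem F X z v w; rewrite hv; have := hc z; lia.
    have := cls_rem F X z v w; rewrite (negbTE hv) subn0 => h1.
    apply: leq_trans h1 _.
    case: (set_0Vmem (cls F X z)) => [->|[y yz]]; first by rewrite cards0.
    move: (yz); rewrite inE => /andP[yX czy].
    rewrite (cls_eq X czy); apply: (hb y yX).
    apply/negP=> cvy; move: hv; rewrite inE vX /=; apply/negP/negPn.
    apply: connect_trans czy _; by rewrite (csym F).
  have := cardsID (cls F X v) X.
  have -> : X :&: cls F X v = cls F X v by apply/setIidPr; apply: cls_sub.
  have := hc v; lia.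
Qed.

Fixpoint Phi F (k : nat) X : nat :=
  if k is k'.+1 then \sum_(v in X) \sum_(w in X | w != v) (~~ adj F v w) * Phi F k' (X :\ v :\ w)
  else 1.

Lemma cond_forall F X k : cond F X k <-> [forall z, #|cls F X z| <= k].
Proof. by split=> [h|/forallP h z]; [apply/forallP|exact: h]. Qed.

Lemma Phi_lower F k : forall X, #|X| = k.*2 -> cond F X k -> 2 ^ k * (k`!) ^ 2 <= Phi F k X.
Proof.
elim: k => [|k IH] X cX hc; first by [].
rewrite /=.
pose c := 2 ^ k * (k`!) ^ 2.
pose ok v w := [&& w != v, ~~ connect (adj F) v w & [forall z, #|cls F (X :\ v :\ w) z| <= k]].
have step : forall v, v \in X -> c * k.+1 <= \sum_(w in X | w != v) (~~ adj F v w) * Phi F k (X :\ v :\ w).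
  move=> v vX.
  apply: (@leq_trans (\sum_(w in [set w in X | ok v w]) c)).
    by rewrite sum_nat_const mulnC leq_mul2r (count_ok vX cX hc) orbT.
  rewrite big_mkcond [X in _ <= X]big_mkcond; apply: leq_sum => w _.
  rewrite inE; case: (boolP ((w \in X) && ok v w)) => [/andP[wX /and3P[wv nc hf]]|]; last by [].
  rewrite wX wv /=.
  have nadj : ~~ adj F v w by apply/negP=> /connect1; apply/negP.
  rewrite nadj mul1n; apply: IH; last exact/cond_forall.
  move: cX; rewrite (cardsD1 v X) vX (cardsD1 w (X :\ v)) !inE wv wX /=; lia.
apply: (@leq_trans (\sum_(v in X) c * k.+1)); last exact: leq_sum.
rewrite sum_nat_const cX /c factS expnS -!mul2n; apply: eq_leq; ring.
Qed.
End Comb.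

Local Open Scope ring_scope.

Section Prob.
Variable T : finType.
Variable R : realType.
Implicit Types (F S : {set edge T}) (X : {set T}) (mu : {ffun {set edge T} -> R}).

Definition Ex mu (f : {set edge T} -> R) := \sum_F mu F * f F.

Lemma Ex_part mu (A : {set edge T}) (h : {set edge T} -> R) :
  Ex mu (fun F => h (F :&: A)) = \sum_S h S * Pr mu [pred F | F :&: A == S].
Proof.
rewrite /Ex (partition_big (fun F => F :&: A) xpredT) //=.
apply: eq_bigr => S _; rewrite /Pr mulr_sumr; apply: eq_bigr => F /eqP <-.
by rewrite mulrC.
Qed.

Lemma Ex_indep mu (A B : {set edge T}) (f g : {set edge T} -> R) :
  one_indep mu -> [disjoint vspan A & vspan B] ->
  Ex mu (fun F => f (F :&: A) * g (F :&: B)) =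
  Ex mu (fun F => f (F :&: A)) * Ex mu (fun F => g (F :&: B)).
Proof.
move=> hi hd.
rewrite !Ex_part mulr_suml.
rewrite /Ex (partition_big (fun F => (F :&: A, F :&: B)) xpredT) //=.
under [RHS]eq_bigr => S _ do rewrite mulr_sumr.
rewrite [RHS]pair_bigA /=; apply: eq_bigr => -[S S'] _ /=.
rewrite mulrACA -(hi A B hd S S') /Pr mulr_sumr.
apply: eq_big => [F|F]; first by rewrite xpair_eqE.
rewrite xpair_eqE => /andP[/eqP <- /eqP <-]; by rewrite mulrC.
Qed.

Lemma Ex_ge0 mu f : is_prob mu -> (forall F, 0 <= f F) -> 0 <= Ex mu f.
Proof. by move=> [h0 _] hf; apply: sumr_ge0 => F _; rewrite mulr_ge0. Qed.

Lemma Ex_sum (I : finType) (P : pred I) mu (f : I -> {set edge T} -> R) :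
  Ex mu (fun F => \sum_(i | P i) f i F) = \sum_(i | P i) Ex mu (f i).
Proof.
rewrite /Ex; under eq_bigr => F _ do rewrite mulr_sumr.
by rewrite exchange_big.
Qed.

Lemma Ex1 mu : is_prob mu -> Ex mu (fun _ => 1) = 1.
Proof. by move=> [_ h]; rewrite /Ex; under eq_bigr do rewrite mulr1. Qed.

Definition inner X : {set edge T} := [set e : edge T | sval e \subset X].

Lemma adj_inner F X v w : v \in X -> w \in X -> adj F v w = adj (F :&: inner X) v w.
Proof.
move=> vX wX; rewrite /adj; apply/existsP/existsP => -[e /andP[eF /eqP ev]]; exists e.
  rewrite !inE eF /= ev eqxx /= andbT; apply/subsetP=> z; rewrite !inE.
  by case/orP=> /eqP ->.
by move: eF; rewrite inE => /andP[-> _]; rewrite ev eqxx.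
Qed.

Lemma Phi_inner F k : forall X Y : {set T}, X \subset Y -> Phi F k X = Phi (F :&: inner Y) k X.
Proof.
elim: k => [//|k IH] X Y sXY /=.
apply: eq_bigr => v vX; apply: eq_bigr => w /andP[wX _].
rewrite -adj_inner; try by apply: (subsetP sXY).
congr (_ * _); apply: IH; apply: subset_trans sXY.
by apply/subsetP=> z; rewrite !inE => /and3P[].
Qed.

Lemma vspan_inner X : vspan (inner X) \subset X.
Proof. by apply/bigcupsP=> e; rewrite inE. Qed.

Lemma edge_absent mu (p : R) v w : M1ge p mu -> v != w ->
  Ex mu (fun F => (~~ adj F v w)%:R) <= 1 - p.
Proof.
move=> [hp _ he] vw.
have c2 : #|[set v; w]| == 2%N by rewrite cards2 vw.
pose e : edge T := exist (fun s : {set T} => #|s| == 2%N) [set v; w] c2.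
have hadj : forall F, adj F v w = (e \in F).
  move=> F; rewrite /adj; apply/existsP/idP => [[e' /andP[e'F /eqP ev]]|eF].
    by have -> : e = e' by apply: val_inj; rewrite /= ev.
  by exists e; rewrite eF eqxx.
have h1 : \sum_F mu F * 1 = Pr mu [pred F : {set edge T} | e \in F] + Ex mu (fun F => (~~ adj F v w)%:R).
  rewrite /Pr /Ex (bigID (fun F : {set edge T} => e \in F)) /=; congr (_ + _).
    by apply: eq_bigr => F _; rewrite mulr1.
  rewrite [RHS](bigID (fun F : {set edge T} => e \in F)) /= [X in _ = X + _]big1 ?add0r; last first.
    by move=> F eF; rewrite hadj eF mulr0.
  by apply: eq_bigr => F /negbTE eF; rewrite hadj eF mulr1.
have h2 := Ex1 hp; rewrite /Ex in h2; rewrite h2 in h1.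
have := he e; lra.
Qed.

Lemma eq_Ex mu f g : (forall F, f F = g F) -> Ex mu f = Ex mu g.
Proof. by move=> h; apply: eq_bigr => F _; rewrite h. Qed.

Lemma Phi_mean mu (p : R) k : M1ge p mu -> p <= 1 -> forall X, #|X| = k.*2 ->
  Ex mu (fun F => (Phi F k X)%:R) <= ((k.*2)`!)%:R * (1 - p) ^+ k.
Proof.
move=> hM hp1; have [hP hI _] := hM.
elim: k => [|k IH] X cX.
  by rewrite /= expr0 mulr1 (Ex1 hP).
pose B := ((k.*2)`!)%:R * (1 - p) ^+ k.
rewrite (eq_Ex mu (g := fun F => \sum_(v in X) \sum_(w in X | w != v)
   (~~ adj F v w)%:R * (Phi F k (X :\ v :\ w))%:R)); last first.
  by move=> F /=; rewrite natr_sum; apply: eq_bigr => v _; rewrite natr_sum; apply: eq_bigr => w _; rewrite natrM.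
rewrite Ex_sum.
apply: (@le_trans _ _ (\sum_(v in X) \sum_(w in X :\ v) (1 - p) * B)).
  apply: ler_sum => v vX; rewrite Ex_sum.
  rewrite [X in _ <= X](eq_bigl (fun w => (w \in X) && (w != v))); last by move=> w; rewrite !inE andbC.
  apply: ler_sum => w /andP[wX wv].
  set Y := X :\ v :\ w.
  have cY : #|Y| = k.*2.
    move: cX; rewrite (cardsD1 v X) vX (cardsD1 w (X :\ v)) !inE wv wX /=; rewrite /Y; lia.
  rewrite (eq_Ex mu (g := fun F => (~~ adj (F :&: inner [set v; w]) v w)%:R *
                                   (Phi (F :&: inner Y) k Y)%:R)); last first.
    move=> F; rewrite -adj_inner ?inE ?eqxx ?orbT //.
    by rewrite -Phi_inner.
  rewrite (@Ex_indep mu (inner [set v; w]) (inner Y) (fun S => (~~ adj S v w)%:R) (fun S => (Phi S k Y)%:R) hI); last first.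
    apply: disjointW (vspan_inner _) (vspan_inner _) _.
    rewrite disjoint_subset; apply/subsetP=> z; rewrite !inE /Y.
    by case/orP=> /eqP ->; rewrite ?eqxx ?andbF.
  rewrite (eq_Ex mu (g := fun F => (~~ adj F v w)%:R)); last first.
    by move=> F /=; rewrite -adj_inner ?inE ?eqxx ?orbT.
  rewrite (@eq_Ex mu (fun F => (Phi (F :&: inner Y) k Y)%:R) (fun F => (Phi F k Y)%:R)); last first.
    by move=> F /=; rewrite -Phi_inner.
  apply: ler_pM.
  - by apply: Ex_ge0 => // F.
  - by apply: Ex_ge0 => // F.
  - by apply: edge_absent hM _; rewrite eq_sym.
  - exact: IH.
rewrite (eq_bigr (fun v => (1 - p) * B *+ (k.*2).+1)); last first.
  move=> v vX; rewrite sumr_const; congr (_ *+ _).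
  by move: cX; rewrite (cardsD1 v X) vX /=; lia.
rewrite sumr_const cX /B doubleS !factS -!mulrnA exprS.
rewrite le_eqVlt; apply/orP; left; apply/eqP; rewrite !natrM; ring.
Qed.

End Prob.
Section Lower.
Variable T : finType.
Variable R : realType.
Variable n : nat.
Hypothesis cT : #|T| = n.*2.

Lemma lower_bound (p : R) (mu : {ffun {set edge T} -> R}) : M1ge p mu -> p <= 1 ->
  1 - ('C(n.*2, n))%:R * ((1 - p) / 2) ^+ n <= Pr mu [pred F | (n < C1size F)%N].
Proof.
move=> hM hp1; have [hP hI he] := hM; have [h0 h1] := hP.
have hbad : forall F : {set edge T}, ~~ (n < C1size F)%N -> (2 ^ n * (n`!) ^ 2 <= Phi F n setT)%N.
  move=> F; rewrite -leqNgt => hC; apply: Phi_lower; first by rewrite cardsT.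
  move=> z; apply: (leq_trans _ hC); apply: (@leq_trans (comp_size F z)); last exact: (leq_bigmax (F := fun x => comp_size F x)).
  by rewrite /comp_size; apply: subset_leq_card; apply/subsetP => y; rewrite !inE.
pose Pb := \sum_(F : {set edge T} | ~~ (n < C1size F)%N) mu F.
have hsplit : Pr mu [pred F | (n < C1size F)%N] = 1 - Pb.
  by rewrite -h1 (bigID (fun F : {set edge T} => (n < C1size F)%N)) /= addrK.
rewrite hsplit lerD2l lerN2.
pose a : R := (2 ^ n * (n`!) ^ 2)%:R.
have a0 : 0 < a by rewrite ltr0n muln_gt0 expn_gt0 /= expn_gt0 fact_gt0.
have hPb : Pb * a <= ((n.*2)`!)%:R * (1 - p) ^+ n.
  apply: le_trans (Phi_mean hM hp1 (X := setT) _); last by rewrite cardsT.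
  rewrite /Pb /Ex mulr_suml [X in _ <= X](bigID (fun F : {set edge T} => ~~ (n < C1size F)%N)) /=.
  rewrite -[X in X <= _]addr0; apply: lerD.
    apply: ler_sum => F hF; apply: ler_wpM2l => //; rewrite ler_nat; exact: hbad.
  by apply: sumr_ge0 => F _; rewrite mulr_ge0.
rewrite -(ler_pM2r a0); apply: le_trans hPb _.
have hb := bin_fact (leq_addr n n); rewrite addnK addnn in hb.
rewrite -hb /a !natrM expr_div_n.
rewrite le_eqVlt; apply/orP; left; apply/eqP.
rewrite natrX; field.
by rewrite expf_neq0 // pnatr_eq0.
Qed.

End Lower.

Section Indep.
Variables (T X : finType) (K : comNzRingType) (om : X -> K).
Hypothesis om1 : \sum_x om x = 1.

Definition Om (s : {ffun T -> X}) : K := \prod_v om (s v).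
Definition Eo (g : {ffun T -> X} -> K) : K := \sum_s g s * Om s.

Lemma Eo1 : Eo (fun _ => 1) = 1.
Proof.
rewrite /Eo; under eq_bigr do rewrite mul1r.
rewrite /Om -(bigA_distr_bigA (fun (v : T) (x : X) => om x)) /=.
by rewrite big1 // => v _; rewrite om1.
Qed.

Definition mg (D : {set T}) (s t : {ffun T -> X}) : {ffun T -> X} :=
  [ffun v => if v \in D then s v else t v].

Lemma Eo_indep (D : {set T}) (g h : {ffun T -> X} -> K) :
  (forall s t : {ffun T -> X}, (forall v, v \in D -> s v = t v) -> g s = g t) ->
  (forall s t : {ffun T -> X}, (forall v, v \notin D -> s v = t v) -> h s = h t) ->
  Eo (fun s => g s * h s) = Eo g * Eo h.
Proof.
move=> hg hh.
rewrite /Eo mulr_suml.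
under [RHS]eq_bigr => s _ do rewrite mulr_sumr.
rewrite [RHS]pair_bigA /=.
pose Phi (st : {ffun T -> X} * {ffun T -> X}) := (mg D st.1 st.2, mg D st.2 st.1).
have Pinv : involutive Phi.
  move=> [s t]; rewrite /Phi /=; congr (_, _); apply/ffunP => v; rewrite !ffunE;
  by case: (v \in D).
rewrite (reindex_inj (inv_inj Pinv)) /=.
have -> : \sum_s g s * h s * Om s = (\sum_s g s * h s * Om s) * \sum_t Om t.
  have -> : \sum_t Om t = 1 by have := Eo1; rewrite /Eo; under eq_bigr do rewrite mul1r.
  by rewrite mulr1.
rewrite mulr_suml.
rewrite (eq_bigr (fun s => \sum_t g s * h s * Om s * Om t)); last by move=> s _; rewrite mulr_sumr.
rewrite pair_bigA /=; apply: eq_bigr => -[s t] _ /=.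
have e1 : g (mg D s t) = g s by apply: hg => v vD; rewrite ffunE vD.
have e2 : h (mg D t s) = h s by apply: hh => v vD; rewrite ffunE (negbTE vD).
rewrite e1 e2.
have e3 : Om (mg D s t) * Om (mg D t s) = Om s * Om t.
  rewrite /Om -!big_split /=; apply: eq_bigr => v _; rewrite !ffunE.
  by case: (v \in D) => //; rewrite mulrC.
rewrite -[LHS]mulrA -e3; ring.
Qed.

Lemma Eo_point (x : T) (a : X) : Eo (fun s : {ffun T -> X} => (s x == a)%:R) = om a.
Proof.
rewrite /Eo.
pose G (v : T) (u : X) := if v == x then (u == a)%:R * om u else om u.
have -> : \sum_(s : {ffun T -> X}) (s x == a)%:R * Om s = \sum_(s : {ffun T -> X}) \prod_v G v (s v).
  apply: eq_bigr => s _; rewrite /Om (bigD1 x) //= [RHS](bigD1 x) //= /G eqxx.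
  rewrite mulrA; congr (_ * _); apply: eq_bigr => v /negbTE ->; by [].
rewrite -(bigA_distr_bigA G) (bigD1 x) //= [X in _ * X]big1 ?mulr1; last first.
  by move=> v /negbTE vx; rewrite /G vx om1.
rewrite /G eqxx (bigD1 a) //= eqxx mul1r big1 ?addr0 //.
by move=> u /negbTE ->; rewrite mul0r.
Qed.

Lemma Eo_add (g h : {ffun T -> X} -> K) : Eo (fun s => g s + h s) = Eo g + Eo h.
Proof. by rewrite /Eo -big_split; apply: eq_bigr => s _; rewrite mulrDl. Qed.

Lemma Eo_opp (g : {ffun T -> X} -> K) : Eo (fun s => - g s) = - Eo g.
Proof. by rewrite /Eo -sumrN; apply: eq_bigr => s _; rewrite mulNr. Qed.

Lemma Eo_ext (g h : {ffun T -> X} -> K) : (forall s, g s = h s) -> Eo g = Eo h.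
Proof. by move=> e; apply: eq_bigr => s _; rewrite e. Qed.

End Indep.

Local Notation Re := complex.Re.
Local Notation Im := complex.Im.

Lemma sum_opt (K : nmodType) (f : option bool -> K) :
  \sum_x f x = f None + f (Some true) + f (Some false).
Proof.
rewrite (bigD1 None) //= (bigD1 (Some true)) //= (bigD1 (Some false)) //= big1.
  by rewrite addr0 !addrA.
by case=> [[]|].
Qed.

Section Cplx.
Variable R : realType.
Local Notation C := (R[i]).

Lemma ReD (x y : C) : Re (x + y) = Re x + Re y. Proof. by case: x; case: y. Qed.
Lemma ImD (x y : C) : Im (x + y) = Im x + Im y. Proof. by case: x; case: y. Qed.
Lemma ReN (x : C) : Re (- x) = - Re x. Proof. by case: x. Qed.
Lemma ImN (x : C) : Im (- x) = - Im x. Proof. by case: x. Qed.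
Lemma ReM (x y : C) : Re (x * y) = Re x * Re y - Im x * Im y. Proof. by case: x; case: y. Qed.
Lemma ImM (x y : C) : Im (x * y) = Re x * Im y + Im x * Re y. Proof. by case: x; case: y. Qed.
Lemma Re1 : Re (1 : C) = 1. Proof. by []. Qed.
Lemma Im1 : Im (1 : C) = 0. Proof. by []. Qed.
Lemma Re0 : Re (0 : C) = 0. Proof. by []. Qed.
Lemma Im0 : Im (0 : C) = 0. Proof. by []. Qed.

Lemma Re_sum (I : finType) (P : pred I) (f : I -> C) :
  Re (\sum_(i | P i) f i) = \sum_(i | P i) Re (f i).
Proof. exact: (big_morph _ ReD Re0). Qed.
Lemma Im_sum (I : finType) (P : pred I) (f : I -> C) :
  Im (\sum_(i | P i) f i) = \sum_(i | P i) Im (f i).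
Proof. exact: (big_morph _ ImD Im0). Qed.

Lemma Re_ind (b : bool) (z : C) : Re ((b%:R : C) * z) = if b then Re z else 0.
Proof. by case: b; rewrite ?mul1r ?mul0r. Qed.
Lemma Im_ind (b : bool) (z : C) : Im ((b%:R : C) * z) = if b then Im z else 0.
Proof. by case: b; rewrite ?mul1r ?mul0r. Qed.

Definition Ep (phi : R) : C := Complex (cos phi) (sin phi).
Definition Rc (a : R) : C := Complex a 0.

Lemma EpD a b : Ep (a + b) = Ep a * Ep b.
Proof. by rewrite /Ep cosD sinD; congr Complex; ring. Qed.
Lemma Ep0 : Ep 0 = 1. Proof. by rewrite /Ep cos0 sin0. Qed.
Lemma RcM a b : Rc (a * b) = Rc a * Rc b.
Proof. by rewrite /Rc; congr Complex; ring. Qed.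
Lemma Rc1 : Rc 1 = 1. Proof. by []. Qed.

Lemma prod_polar (I : finType) (f g : I -> R) :
  \prod_i (Rc (f i) * Ep (g i)) = Rc (\prod_i f i) * Ep (\sum_i g i).
Proof.
rewrite big_split /=; congr (_ * _).
  by rewrite (big_morph _ RcM Rc1).
by rewrite (big_morph _ EpD Ep0).
Qed.

Lemma Re_polar a b : Re (Rc a * Ep b) = a * cos b.
Proof. by rewrite /= mul0r subr0. Qed.
Lemma Im_polar a b : Im (Rc a * Ep b) = a * sin b.
Proof. by rewrite /= mul0r addr0. Qed.

End Cplx.

Lemma cext (R : realType) (x y : R[i]) : Re x = Re y -> Im x = Im y -> x = y.
Proof. by case: x; case: y => a b c d /= -> ->. Qed.

Section Constr.
Variable R : realType.
Variable T : finType.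
Variables r c th : R.
Hypothesis r0 : 0 <= r.
Hypothesis c0 : 0 <= c.
Hypothesis hs : r * cos th *+ 2 + c = 1.
Hypothesis th0 : 0 <= th.
Hypothesis thN : th * #|T|%:R <= pi / 2.

Local Notation C := (R[i]).
Local Notation sT := {ffun T -> option bool}.
Implicit Types s t : sT.

Definition rho (x : option bool) : R := if x is None then c else r.
Definition dd (x : option bool) : R :=
  match x with None => 0 | Some true => 1 | Some false => -1 end.
Definition om (x : option bool) : C := Rc (rho x) * Ep (th * dd x).

Lemma om1 : \sum_x om x = 1.
Proof.
rewrite sum_opt; apply: cext.
  rewrite !ReD /om !Re_polar /=.
  by rewrite mulr0 mulr1 mulrN1 cosN cos0; move: hs; rewrite mulr2n; lra.
rewrite !ImD /om !Im_polar /=.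
by rewrite mulr0 mulr1 mulrN1 sinN sin0; lra.
Qed.

Definition Dsum (s : sT) := \sum_v dd (s v).

Lemma OmE s : Om om s = Rc (\prod_v rho (s v)) * Ep (th * Dsum s).
Proof. by rewrite /Om /om prod_polar /Dsum mulr_sumr. Qed.

Lemma ReOm_ge0 s : 0 <= Re (Om om s).
Proof.
rewrite OmE Re_polar; apply: mulr_ge0.
  by apply: prodr_ge0 => v _; case: (s v).
apply: cos_ge0_pihalf; rewrite -ler_norml normrM (ger0_norm th0).
apply: le_trans thN; apply: ler_wpM2l => //.
apply: le_trans (ler_norm_sum _ _ _) _.
rewrite -sum1_card natr_sum; apply: ler_sum => v _.
by case: (s v) => [[]|] /=; rewrite ?normrN ?normr0 ?normr1 ?ler01.
Qed.

Definition sw (s : sT) : sT := [ffun v => omap negb (s v)].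

Lemma swK : involutive sw.
Proof. by move=> s; apply/ffunP => v; rewrite !ffunE; case: (s v) => [[]|]. Qed.

Lemma ImOm_sw s : Im (Om om (sw s)) = - Im (Om om s).
Proof.
rewrite !OmE !Im_polar.
have -> : \prod_v rho (sw s v) = \prod_v rho (s v).
  by apply: eq_bigr => v _; rewrite ffunE; case: (s v).
have -> : Dsum (sw s) = - Dsum s.
  rewrite /Dsum -sumrN; apply: eq_bigr => v _; rewrite ffunE.
  by case: (s v) => [[]|] /=; rewrite ?opprK ?oppr0.
by rewrite mulrN sinN mulrN.
Qed.

Lemma ReEo (P : pred sT) : Re (Eo om (fun s => (P s)%:R)) = \sum_(s | P s) Re (Om om s).
Proof.
rewrite /Eo Re_sum [RHS]big_mkcond; apply: eq_bigr => s _; exact: Re_ind.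
Qed.

Lemma Im_Eo_sym (P : pred sT) : (forall s, P (sw s) = P s) -> Im (Eo om (fun s => (P s)%:R)) = 0.
Proof.
move=> hP; rewrite /Eo Im_sum.
under eq_bigr do rewrite Im_ind.
have e := @reindex_inj R +%R 0 _ sw xpredT (fun s => if P s then Im (Om om s) else 0) (inv_inj swK).
rewrite /= in e.
have : \sum_s (if P s then Im (Om om s) else 0) = - \sum_s (if P s then Im (Om om s) else 0).
  rewrite {1}e -sumrN; apply: eq_bigr => s _.
  by rewrite hP ImOm_sw; case: (P s); rewrite ?oppr0.
lra.
Qed.

Definition opp (a b : option bool) :=
  if a is Some u then (if b is Some w then u != w else false) else false.

Definition graph (s : sT) : {set edge T} :=
  [set e : edge T | [forall x in sval e, forall y in sval e, ~~ opp (s x) (s y)]].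

Lemma graph_sw s : graph (sw s) = graph s.
Proof.
apply/setP=> e; rewrite !inE; apply: eq_forallb_in => x _; apply: eq_forallb_in => y _.
by rewrite !ffunE; case: (s x) => [[]|]; case: (s y) => [[]|].
Qed.

Lemma graph_loc s t (A : {set edge T}) : (forall v, v \in vspan A -> s v = t v) ->
  graph s :&: A = graph t :&: A.
Proof.
move=> h; apply/setP => e; rewrite !inE; case eA: (e \in A); rewrite ?andbF ?andbT //.
have sub : sval e \subset vspan A by apply: (bigcup_sup e eA).
apply: eq_forallb_in => x xe; apply: eq_forallb_in => y ye.
by rewrite !h // (subsetP sub).
Qed.

Definition muC F := Eo om (fun s => (graph s == F)%:R).
Definition mu : {ffun {set edge T} -> R} := [ffun F => Re (muC F)].

Lemma PrE (Q : pred {set edge T}) : Pr mu Q = Re (Eo om (fun s => (Q (graph s))%:R)).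
Proof.
rewrite /Pr; under eq_bigr do rewrite ffunE.
rewrite -Re_sum /muC /Eo exchange_big /=; congr Re; apply: eq_bigr => s _.
rewrite -mulr_suml; congr (_ * _).
rewrite big_mkcond (bigD1 (graph s)) //= eqxx big1 ?addr0; first by case: (Q (graph s)).
by move=> F; rewrite eq_sym => /negbTE ->; case: (Q F).
Qed.

Lemma mu_prob : is_prob mu.
Proof.
split.
  move=> F; rewrite ffunE /muC ReEo; apply: sumr_ge0 => s _; exact: ReOm_ge0.
transitivity (Pr mu xpredT); first by [].
by rewrite PrE (@Eo_ext _ _ _ _ _ (fun _ => 1)) // (Eo1 T om1).
Qed.

Lemma ind_and (a b : bool) : ((a && b)%:R : C) = a%:R * b%:R.
Proof. by case: a; case: b; rewrite ?mul1r ?mul0r. Qed.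

Lemma mu_indep : one_indep mu.
Proof.
move=> A B hd S S'; rewrite !PrE.
rewrite (@Eo_ext _ _ _ _ _ (fun s => (graph s :&: A == S)%:R * (graph s :&: B == S')%:R)); last first.
  by move=> s; rewrite /= ind_and.
rewrite (Eo_indep om1 (D := vspan A)).
- rewrite ReM (Im_Eo_sym (P := fun s => graph s :&: A == S)); last by move=> s; rewrite graph_sw.
  by rewrite mul0r subr0.
- by move=> s t h; rewrite (graph_loc h).
- move=> s t h; rewrite (@graph_loc s t B) // => v vB; apply: h.
  by rewrite (disjointFl hd vB).
Qed.

Lemma opp_irr a : opp a a = false.
Proof. by case: a => [[]|]. Qed.
Lemma opp_sym a b : opp a b = opp b a.
Proof. by case: a => [[]|]; case: b => [[]|]. Qed.

Lemma in_graph s (x y : T) (e : edge T) : sval e = [set x; y] ->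
  (e \in graph s) = ~~ opp (s x) (s y).
Proof.
move=> ev; rewrite inE ev; apply/forallP/idP.
  move=> H; move: (H x); rewrite !inE eqxx /= => /forallP /(_ y).
  by rewrite !inE eqxx orbT.
move=> h a; apply/implyP; rewrite !inE => /orP[]/eqP->; apply/forallP=> b;
  apply/implyP; rewrite !inE => /orP[]/eqP->; by rewrite ?opp_irr // opp_sym.
Qed.

Lemma mu_edge (e : edge T) : Pr mu [pred F : {set edge T} | e \in F] = 1 - r ^+ 2 *+ 2.
Proof.
have [x [y [xy ev]]] : exists x y, x != y /\ sval e = [set x; y] by apply/cards2P; exact: (valP e).
rewrite PrE.
rewrite (@Eo_ext _ _ _ _ _ (fun s => 1 + - ((s x == Some true)%:R * (s y == Some false)%:R
                                       + (s x == Some false)%:R * (s y == Some true)%:R))); last first.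
  move=> s /=; rewrite (in_graph s ev).
  by case: (s x) => [[]|]; case: (s y) => [[]|]; rewrite /= ?mul0r ?mulr0 ?mul1r ?addr0 ?add0r ?oppr0 ?subrr ?addr0.
rewrite Eo_add Eo_opp (Eo1 T om1) Eo_add.
have hxy : forall a b, Eo om (fun s : sT => (s x == a)%:R * (s y == b)%:R) = om a * om b.
  move=> a b; rewrite (Eo_indep om1 (D := [set x])).
  - by rewrite !(Eo_point om1).
  - by move=> s t h; rewrite h // inE.
  - by move=> s t h; rewrite h // inE eq_sym.
rewrite !hxy ReD Re1 ReN ReD !ReM !ImM /om /= mulr1 mulrN1 cosN sinN.
have h := cos2Dsin2 th.
rewrite -[in RHS](mulr1 (r ^+ 2 *+ 2)) -h; ring.
Qed.

Lemma adj_graph s x y : adj (graph s) x y = (x != y) && ~~ opp (s x) (s y).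
Proof.
apply/idP/idP.
  move=> /existsP [e /andP[eg /eqP ev]].
  have xy : x != y by have := valP e; rewrite ev cards2 eqSS; case: (x != y).
  by rewrite xy -(in_graph s ev).
move=> /andP[xy no].
have c2 : #|[set x; y]| == 2%N by rewrite cards2 xy.
apply/existsP; exists (exist (fun S : {set T} => #|S| == 2%N) [set x; y] c2).
by rewrite (in_graph s (x := x) (y := y)) //= no eqxx.
Qed.

Lemma conn_nopp s x y : ~~ opp (s x) (s y) -> connect (adj (graph s)) x y.
Proof.
case: (eqVneq x y) => [->|xy] h; first exact: connect0.
by apply: connect1; rewrite adj_graph xy.
Qed.

Variable n : nat.
Hypothesis cT : #|T| = n.*2.
Hypothesis n0 : (0 < n)%N.

Definition bal s := [forall v, s v != None] && (#|[set v | s v == Some true]| == n).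

Lemma cardB s : [forall v, s v != None] ->
  #|[set v | s v == Some false]| = (#|T| - #|[set v | s v == Some true]|)%N.
Proof.
move=> /forallP h.
have -> : [set v | s v == Some false] = ~: [set v | s v == Some true].
  by apply/setP=> v; rewrite !inE; move: (h v); case: (s v) => [[]|].
by rewrite cardsCs setCK.
Qed.

Lemma bal_small s : bal s -> forall x, (comp_size (graph s) x <= n)%N.
Proof.
move=> /andP[/forallP hS /eqP hA] x.
have cl : closed (adj (graph s)) [pred y | s y == s x].
  move=> a b; rewrite adj_graph => /andP[_ no]; rewrite !inE.
  move: (hS a) (hS b) no; case: (s a) => [u|] //; case: (s b) => [w|] //= _ _.
  by rewrite negbK => /eqP ->.
apply: (@leq_trans #|[set y | s y == s x]|).
  apply: subset_leq_card; apply/subsetP=> y; rewrite !inE => cxy.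
  by have := closed_connect cl cxy; rewrite !inE eqxx => <-.
move: (hS x); case: (s x) => [[]|] // _.
  by rewrite hA.
rewrite cardB; last by apply/forallP.
by rewrite hA cT; lia.
Qed.

Lemma unbal_big s : ~~ bal s -> exists x, (n < comp_size (graph s) x)%N.
Proof.
case: (boolP [forall v, s v != None]) => hS /=.
  rewrite /bal hS /= => hA.
  case: (ltngtP n #|[set v | s v == Some true]|) => hc; last by rewrite hc eqxx in hA.
    have [x xA] : exists x, x \in [set v | s v == Some true].
      by apply/set0Pn; rewrite -card_gt0; lia.
    exists x; apply: leq_trans hc _; apply: subset_leq_card; apply/subsetP => y.
    rewrite !inE in xA *; move=> yA; apply: conn_nopp.
    by rewrite (eqP xA) (eqP yA).
  have hB := cardB hS.
  have [x xB] : exists x, x \in [set v | s v == Some false].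
    by apply/set0Pn; rewrite -card_gt0 hB; lia.
  exists x; apply: (@leq_trans #|[set v | s v == Some false]|).
    by rewrite hB cT; lia.
  apply: subset_leq_card; apply/subsetP => y.
  rewrite !inE in xB *; move=> yB; apply: conn_nopp.
  by rewrite (eqP xB) (eqP yB).
move/forallPn: hS => [v]; rewrite negbK => /eqP hv.
exists v; rewrite /comp_size.
have -> : [set y | connect (adj (graph s)) v y] = setT.
  by apply/setP=> y; rewrite !inE; apply: conn_nopp; rewrite hv.
by rewrite cardsT cT; lia.
Qed.

Lemma bad_iff s : ~~ (n < C1size (graph s))%N = bal s.
Proof.
case: (boolP (bal s)) => hb.
  by rewrite -leqNgt; apply/bigmax_leqP => x _; apply: bal_small.
apply/negbF; have [x hx] := unbal_big hb.
by apply: leq_trans hx (leq_bigmax (F := fun x => comp_size (graph s) x) x).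
Qed.

Lemma ReOm_bal s : bal s -> Re (Om om s) = r ^+ n.*2.
Proof.
move=> /andP[/forallP hS /eqP hA].
rewrite OmE Re_polar.
have -> : \prod_v rho (s v) = \prod_(v : T) r.
  by apply: eq_bigr => v _; move: (hS v); case: (s v).
have -> : Dsum s = 0.
  have cnt : forall (P : pred T), \sum_v ((P v)%:R : R) = #|P|%:R.
    move=> P; rewrite -sum1_card natr_sum [RHS]big_mkcond /=.
    by apply: eq_bigr => v _; rewrite unfold_in; case: (P v).
  have -> : Dsum s = \sum_v (((s v == Some true) : bool)%:R - ((s v == Some false) : bool)%:R).
    by rewrite /Dsum; apply: eq_bigr => v _; move: (hS v); case: (s v) => [[]|] //= _; rewrite ?subr0 ?sub0r.
  rewrite sumrB !cnt.
  have e1 : #|[pred v | s v == Some true]| = #|[set v | s v == Some true]| by apply: eq_card => v; rewrite inE.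
  have e2 : #|[pred v | s v == Some false]| = #|[set v | s v == Some false]| by apply: eq_card => v; rewrite inE.
  rewrite e1 e2 cardB; last by apply/forallP.
  by rewrite hA cT -addnn addnK subrr.
by rewrite mulr0 cos0 mulr1 prodr_const cardT -cardT cT.
Qed.

Lemma card_bal : #|[set s | bal s]| = 'C(n.*2, n).
Proof.
pose f (S : {set T}) : sT := [ffun v => Some (v \in S)].
have finj : injective f.
  move=> S1 S2 e; apply/setP=> v; have := congr1 (fun g : sT => g v) e.
  by rewrite /f !ffunE => -[].
have -> : [set s | bal s] = f @: [set S : {set T} | #|S| == n].
  apply/setP=> s; rewrite inE; apply/idP/imsetP.
    move=> /andP[/forallP hS hA]; exists [set v | s v == Some true]; first by rewrite inE.
    apply/ffunP=> v; rewrite !ffunE inE; move: (hS v); by case: (s v) => [[]|].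
  move=> [S]; rewrite inE => hS ->; apply/andP; split.
    by apply/forallP=> v; rewrite ffunE.
  have -> : [set v | f S v == Some true] = S by apply/setP=> v; rewrite !inE ffunE; case: (v \in S).
  exact: hS.
by rewrite card_imset // card_draws cT.
Qed.

Lemma mu_good : Pr mu [pred F | (n < C1size F)%N] = 1 - ('C(n.*2, n))%:R * r ^+ n.*2.
Proof.
have [_ h1] := mu_prob.
have hb : Pr mu [pred F : {set edge T} | ~~ (n < C1size F)%N] = ('C(n.*2, n))%:R * r ^+ n.*2.
  rewrite PrE (@Eo_ext _ _ _ _ _ (fun s => (bal s)%:R)); last by move=> s /=; rewrite bad_iff.
  rewrite ReEo (eq_bigr (fun _ => r ^+ n.*2)); last by move=> s; apply: ReOm_bal.
  rewrite sumr_const -card_bal mulr_natl; congr (_ *+ _).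
  by apply: eq_card => s; rewrite inE.
rewrite -hb -h1 /Pr [X in _ = X - _](bigID (fun F : {set edge T} => (n < C1size F)%N)) /=.
by rewrite addrK.
Qed.

End Constr.

Theorem proposition16 (R : realType) (n : nat) (hn : (0 < n)%N) (p : R) :
  (1 - tan (pi / (4 * n)%:R) ^+ 2) / 2 <= p <= 1 ->
  let v := 1 - ('C(2 * n, n))%:R * ((1 - p) / 2) ^+ n in
  (forall mu : {ffun {set edge 'I_(2 * n)} -> R},
     M1ge p mu -> v <= Pr mu [pred F | (n < C1size F)%N]) /\
  (exists mu : {ffun {set edge 'I_(2 * n)} -> R},
     M1ge p mu /\ Pr mu [pred F | (n < C1size F)%N] = v).
Proof.
move=> /andP[hp1 hp2] v.
have cT : #|'I_(2 * n)| = n.*2 by rewrite card_ord mul2n.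
split.
  move=> mu hM; rewrite /v.
  by have := lower_bound cT hM hp2; rewrite -mul2n.
pose th : R := pi / (4 * n)%:R.
pose q := (1 - p) / 2.
pose r := Num.sqrt q.
have q0 : 0 <= q by rewrite /q; lra.
have rq : r ^+ 2 = q by rewrite sqr_sqrtr.
have r0 : 0 <= r by exact: sqrtr_ge0.
have nR : 1 <= (n%:R : R) by rewrite ler1n.
have pi0 := pi_gt0 R.
have thE : th * (4 * n%:R) = pi.
  rewrite /th natrM divfK // mulf_neq0 // ?pnatr_eq0 //; lia.
have th0 : 0 <= th by rewrite /th divr_ge0 ?ler0n // ltW.
have thlt : th < pi / 2 by nra.
have cpos : 0 < cos th by apply: cos_gt0_pihalf; apply/andP; split; lra.
have hC2 : cos th ^+ 2 * (1 + tan th ^+ 2) = 1.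
  by rewrite -cos2_tan2 ?mulfV ?expf_neq0 // gt_eqF.
have h4 : 4 * q * cos th ^+ 2 <= 1.
  rewrite -/th in hp1; have := sqr_ge0 (cos th); rewrite /q; nra.
have hrc : r * cos th *+ 2 <= 1.
  have : (r * cos th) ^+ 2 * 4 <= 1 by rewrite exprMn rq; lra.
  have : 0 <= r * cos th by rewrite mulr_ge0 // ltW.
  rewrite mulr2n; nra.
pose c := 1 - r * cos th *+ 2.
have c0 : 0 <= c by rewrite /c; lra.
have hs : r * cos th *+ 2 + c = 1 by rewrite /c; ring.
have thN : th * #|'I_(2 * n)|%:R <= pi / 2.
  rewrite cT -mul2n natrM.
  have -> : th * (2%:R * n%:R) = th * (4 * n%:R) / 2 by field.
  by rewrite thE.
exists (mu 'I_(2 * n) r c th); split.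
  split; first exact: mu_prob.
    exact: mu_indep.
  by move=> e; rewrite mu_edge // rq /q; lra.
rewrite (mu_good r0 c0 hs th0 thN cT hn) /v -mul2n exprM rq.
by [].
Qed.
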